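(* Let $G=(V,E)$ be an undirected graph, $r_\alpha$ a nonnegative integer and $\alpha\colon V\to\{0,1\}$. There is an $r_\alpha$-biased $(1,1)$-dissolution for $(G,\alpha)$ if and only if $G$ has a perfect matching of total weight at least $r_\alpha$ with respect to the edge weights $w(\{x,y\}):=1$ if $\alpha(x)=\alpha(y)=1$ and $w(\{x,y\}):=0$ otherwise.
   Context: For $V'\subseteq V(G)$ let $Z(V',G):=\{(x,y)\mid x\in V',\ y\in V(G)\setminus V',\ \{x,y\}\in E(G)\}$. For positive integers $s,\Delta_s$, an $(s,\Delta_s)$-dissolution for $G$ is a pair $(D,z)$ with $D\subset V(G)$ and $z\colon Z(D,G)\to\{0,\dots,s\}$ such that (a) each $v'\in D$ satisfies $\sum_{(v',v)\in Z(D,G)} z(v',v)=s$, and (b) each $v\in V(G)\setminus D$ satisfies $\sum_{(v',v)\in Z(D,G)} z(v',v)=\Delta_s$. Given $\alpha\colon V(G)\to\{0,\dots,s\}$ and an integer $r_\alpha$, a tuple $(D,z,z_\alpha,R_\alpha)$ is an $r_\alpha$-biased $(s,\Delta_s)$-dissolution for $(G,\alpha)$ if $(D,z)$ is an $(s,\Delta_s)$-dissolution, $z_\alpha\colon Z(D,G)\to\{0,\dots,s\}$, $R_\alpha\subseteq V(G)\setminus D$ with $|R_\alpha|=r_\alpha$, and (c) $z_\alpha(v',v)\le z(v',v)$ for all $(v',v)\in Z(D,G)$; (d) each $v'\in D$ satisfies $\sum_{(v',v)\in Z(D,G)} z_\alpha(v',v)=\alpha(v')$; (e) each $v\in R_\alpha$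 satisfies $\alpha(v)+\sum_{(v',v)\in Z(D,G)} z_\alpha(v',v)>(s+\Delta_s)/2$. *)

(* Defs.v *)
From mathcomp Require Import all_boot.
Set Implicit Arguments. Unset Strict Implicit. Unset Printing Implicit Defensive.

(* An undirected (simple) graph on a finite vertex type T is given by a
   symmetric irreflexive adjacency relation e : rel T. *)

Definition inZ (T : finType) (e : rel T) (D : {set T}) (x y : T) : bool :=
  [&& x \in D, y \notin D & e x y].

(* (s, Delta_s)-dissolution (D, z).  z is a total function T -> T -> nat of
   which only the values on Z(D,G) matter. *)
Definition dissolution (T : finType) (e : rel T) (s Ds : nat)
    (D : {set T}) (z : T -> T -> nat) : Prop :=
  (forall x y, inZ e D x y -> z x y <= s) /\
  (forall v', v' \in D -> \sum_(v | inZ e D v' v) z v' v = s) /\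
  (forall v, v \notin D -> \sum_(v' | inZ e D v' v) z v' v = Ds).

Definition biased_dissolution (T : finType) (e : rel T) (s Ds : nat)
    (alpha : T -> nat) (r : nat)
    (D : {set T}) (z za : T -> T -> nat) (R : {set T}) : Prop :=
  dissolution e s Ds D z /\
  (forall x y, inZ e D x y -> za x y <= s) /\
  R \subset ~: D /\ #|R| = r /\
  (forall x y, inZ e D x y -> za x y <= z x y) /\
  (forall v', v' \in D -> \sum_(v | inZ e D v' v) za v' v = alpha v') /\
  (* alpha(v) + sum > (s + Ds)/2, written over the integers *)
  (forall v, v \in R -> s + Ds < 2 * (alpha v + \sum_(v' | inZ e D v' v) za v' v)).

Definition perfect_matching (T : finType) (e : rel T) (M : {set {set T}}) : Prop :=
  (forall f, f \in M -> exists x y, e x y /\ f = [set x; y]) /\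
  (forall v, exists f, [/\ f \in M, v \in f &
                         forall g, g \in M -> v \in g -> g = f]).

Definition edge_weight (T : finType) (alpha : T -> nat) (f : {set T}) : nat :=
  if [forall x in f, alpha x == 1] then 1 else 0.

Definition matching_weight (T : finType) (alpha : T -> nat) (M : {set {set T}}) : nat :=
  \sum_(f in M) edge_weight alpha f.

(* Main.v *)
Require Import Defs.
From mathcomp Require Import all_boot.
Set Implicit Arguments. Unset Strict Implicit. Unset Printing Implicit Defensive.

Lemma subset_card_k (T : finType) (W : {set T}) k :
  k <= #|W| -> exists R : {set T}, R \subset W /\ #|R| = k.
Proof.
elim: k => [|k IH] hk; first by exists set0; rewrite sub0set cards0.
have [R [RW cR]] := IH (ltnW hk).
have : 0 < #|W :\: R| by rewrite cardsD (setIidPr RW) cR subn_gt0.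
case/card_gt0P => x; rewrite inE => /andP [xR xW].
exists (x |: R); rewrite subUset sub1set xW RW cardsU1 xR cR; split => //.
Qed.

Lemma ew_le1 (T : finType) alpha (f : {set T}) : edge_weight alpha f <= 1.
Proof. by rewrite /edge_weight; case: ifP. Qed.

Theorem lemma3 (T : finType) (e : rel T) (e_sym : symmetric e) (e_irr : irreflexive e)
    (r : nat) (alpha : T -> nat) (alpha01 : forall v, alpha v <= 1) :
  (exists (D : {set T}) (z za : T -> T -> nat) (R : {set T}),
      biased_dissolution e 1 1 alpha r D z za R)
  <->
  (exists M : {set {set T}}, perfect_matching e M /\ r <= matching_weight alpha M).
Proof.
split.
- move=> [D [z [za [R [[z1 [zD zN]] [za1 [RD [cR [zaz [zaD zaR]]]]]]]]]].
  have pD : forall v', v' \in D -> exists w, [/\ inZ e D v' w, z v' w = 1 &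
        forall j, inZ e D v' j -> z v' j != 0 -> j = w].
    move=> v' Hv; have /eqP := zD v' Hv; case/sum_nat_eq1 => w [P1 P2 P3].
    exists w; split => // j Hj; apply: contraNeq => /eqP njw.
    by rewrite (P3 j) //; apply/eqP.
  have pN : forall v, v \notin D -> exists w, [/\ inZ e D w v, z w v = 1 &
        forall j, inZ e D j v -> z j v != 0 -> j = w].
    move=> v Hv; have /eqP := zN v Hv; case/sum_nat_eq1 => w [P1 P2 P3].
    exists w; split => // j Hj; apply: contraNeq => /eqP njw.
    by rewrite (P3 j) //; apply/eqP.
  pose M := [set f : {set T} | [exists x, exists y,
              [&& inZ e D x y, z x y != 0 & f == [set x; y]]]].
  have inM : forall x y, inZ e D x y -> z x y != 0 -> [set x; y] \in M.
    by move=> x y H1 H2; rewrite inE; apply/existsP; exists x; apply/existsP; exists y;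
      rewrite H1 H2 eqxx.
  have Minv : forall f, f \in M -> exists x y, [/\ inZ e D x y, z x y != 0 & f = [set x; y]].
    move=> f; rewrite inE => /existsP [x /existsP [y /and3P [H1 H2 /eqP H3]]].
    by exists x, y.
  pose phi := fun v => [set odflt v [pick w | inZ e D w v && (z w v != 0)]; v].
  have phiP : forall v, v \notin D -> exists w, [/\ inZ e D w v, z w v = 1,
        phi v = [set w; v] & forall j, inZ e D j v -> z j v != 0 -> j = w].
    move=> v Hv; have [w [H1 H2 H3]] := pN v Hv; exists w; split => //.
    rewrite /phi; case: pickP => [j /andP [j1 j2]|] /=; first by rewrite (H3 j).
    by move/(_ w); rewrite H1 H2.
  exists M; split; first split.
  + move=> f /Minv [x [y [H1 _ ->]]]; exists x, y; split => //.
    by case/and3P: H1.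
  + move=> v; case: (boolP (v \in D)) => Hv.
    * have [w [H1 H2 H3]] := pD v Hv; exists [set v; w]; split.
      -- by apply: inM => //; rewrite H2.
      -- by rewrite !inE eqxx.
      -- move=> g /Minv [x [y [G1 G2 ->]]]; rewrite !inE => /orP [] /eqP vx.
         ++ by subst x; rewrite (H3 y).
         ++ by subst y; move: G1; rewrite /inZ Hv andbF.
    * have [w [H1 H2 H3]] := pN v Hv; exists [set w; v]; split.
      -- by apply: inM => //; rewrite H2.
      -- by rewrite !inE eqxx orbT.
      -- move=> g /Minv [x [y [G1 G2 ->]]]; rewrite !inE => /orP [] /eqP vx.
         ++ by subst x; move: G1; rewrite /inZ (negbTE Hv).
         ++ by subst y; rewrite (H3 x).
  + rewrite /matching_weight.
    have RN : forall v, v \in R -> v \notin D.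
      by move=> v vR; have := subsetP RD v vR; rewrite inE.
    have sub : phi @: R \subset M.
      apply/subsetP => f /imsetP [v vR ->].
      have [w [H1 H2 -> _]] := phiP v (RN v vR); by apply: inM => //; rewrite H2.
    rewrite (big_setID (phi @: R)) /= (setIidPr sub).
    apply: leq_trans (leq_addr _ _).
    rewrite -cR -(card_in_imset (f := phi)); last first.
      move=> v1 v2 v1R v2R.
      have [w1 [A1 _ -> _]] := phiP v1 (RN v1 v1R).
      have [w2 [A2 _ -> _]] := phiP v2 (RN v2 v2R) => E.
      have : v1 \in [set w2; v2] by rewrite -E !inE eqxx orbT.
      rewrite !inE => /orP [] /eqP // ev; subst v1.
      by move: A2 A1; rewrite /inZ => /andP [-> _] /and3P [_ /negP].
    rewrite -sum1_card leq_eqVlt; apply/orP; left; apply/eqP/eq_bigr.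
    move=> f /imsetP [v vR ->].
    have [w [H1 H2 -> H3]] := phiP v (RN v vR).
    have := zaR v vR.
    have Hs : \sum_(v' | inZ e D v' v) za v' v <= 1.
      rewrite -H2; apply: leq_trans (_ : \sum_(v' | inZ e D v' v) z v' v <= _).
        by apply: leq_sum => i Hi; apply: zaz.
      by rewrite zN ?RN // H2.
    have Ha := alpha01 v.
    move=> Hlt.
    have av : alpha v = 1.
      by move: Hlt Hs Ha; case: (alpha v) => [|[|]] //; case: (\sum_(_ | _) _) => [|[|]].
    have s1 : \sum_(v' | inZ e D v' v) za v' v == 1.
      by move: Hlt Hs; rewrite av; case: (\sum_(_ | _) _) => [|[|]].
    case/sum_nat_eq1: s1 => u [U1 U2 _].
    have uw : u = w.
      apply: H3 => //; rewrite -lt0n; apply: leq_trans (zaz _ _ U1); by rewrite U2.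
    subst u.
    have aw : alpha w = 1.
      apply/eqP; rewrite eqn_leq alpha01 /= -(zaD w); last by case/and3P: H1.
      rewrite (bigD1 v) //= U2; exact: leq_addr.
    rewrite /edge_weight; case: ifP => // /negP; case; apply/forall_inP => x.
    by rewrite !inE => /orP [] /eqP ->; rewrite ?aw ?av.
- move=> [M [[Me Mv] Hw]].
  have Mneq : forall v w, [set v; w] \in M -> v != w.
    move=> v w /Me [x [y [exy E]]]; apply/eqP => vw; subst w.
    have : x \in [set v; v] by rewrite E !inE eqxx.
    have : y \in [set v; v] by rewrite E !inE eqxx orbT.
    rewrite !inE !orbb => /eqP yv /eqP xv; subst.
    by rewrite e_irr in exy.
  have Muniq : forall v w w', [set v; w] \in M -> [set v; w'] \in M -> w = w'.
    move=> v w w' H1 H2.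
    have [f [_ _ Hf]] := Mv v.
    have E : [set v; w] = [set v; w'].
      have E1 := Hf _ H1; have E2 := Hf _ H2.
      by rewrite E1 ?inE ?eqxx // E2 // !inE eqxx.
    have : w \in [set v; w'] by rewrite -E !inE eqxx orbT.
    rewrite !inE => /orP [] /eqP // wv; subst w.
    by move: (Mneq _ _ H1); rewrite eqxx.
  have Medge : forall v w, [set v; w] \in M -> e v w.
    move=> v w H; have [x [y [exy E]]] := Me _ H.
    have := Mneq _ _ H => nvw.
    have : v \in [set x; y] by rewrite -E !inE eqxx.
    have : w \in [set x; y] by rewrite -E !inE eqxx orbT.
    rewrite !inE => /orP [] /eqP wx /orP [] /eqP vx; subst v w;
      try done; try by rewrite eqxx in nvw.
    by move: exy; rewrite (e_sym x y).
  have Msym : forall v w, [set v; w] \in M -> [set w; v] \in M.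
    by move=> v w; rewrite setUC.
  have Mex : forall v, exists w, [set v; w] \in M.
    move=> v; have [f [fM vf _]] := Mv v.
    have [x0 [y0 [_ Ef]]] := Me _ fM; subst f.
    move: vf; rewrite !inE => /orP [] /eqP ->; first by exists y0.
    by exists x0; rewrite setUC.
  pose p := fun v => odflt v [pick w | [set v; w] \in M].
  have pP : forall v, [set v; p v] \in M.
    move=> v; rewrite /p; case: pickP => //= H.
    by have [w Hw0] := Mex v; move: (H w); rewrite Hw0.
  have ppv : forall v, p (p v) = v.
    by move=> v; apply: (Muniq (p v)); [exact: pP | exact: Msym (pP v)].
  have pne : forall v, p v != v by move=> v; rewrite eq_sym; apply: Mneq (pP v).
  have pinj : forall v v', p v = p v' -> v = v'.
    by move=> v v' E; rewrite -(ppv v) E ppv.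
  have ep : forall v, e v (p v) by move=> v; apply: Medge (pP v).
  pose D := [set v | (enum_rank v < enum_rank (p v))%N].
  have pD : forall v, (p v \in D) = (v \notin D).
    move=> v; rewrite !inE ppv -leqNgt.
    have : enum_rank (p v) != enum_rank v.
      by apply: contra (pne v) => /eqP /enum_rank_inj ->.
    by rewrite ltn_neqAle => ->.
  have pD' : forall v, v \in D -> p v \notin D by move=> v; rewrite pD negbK.
  have pD'' : forall v, v \notin D -> p v \in D by move=> v; rewrite pD.
  pose z := fun x y : T => nat_of_bool (y == p x).
  pose za := fun x y : T => nat_of_bool ((y == p x) && (alpha x == 1)).
  pose W := [set v | [&& v \notin D, alpha v == 1 & alpha (p v) == 1]].
  have rW : r <= #|W|.
    apply: leq_trans Hw _; rewrite /matching_weight.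
    pose g := fun v => [set p v; v].
    rewrite (big_setID (g @: W)) /=.
    rewrite [X in _ + X]big1 ?addn0; last first.
      move=> f; rewrite !inE => /andP [fn fM].
      have [x [y [_ E]]] := Me _ fM; subst f.
      rewrite /edge_weight; case: ifP => // /forall_inP Ha.
      have ax' : alpha x == 1 by apply: Ha; rewrite !inE eqxx.
      have ay' : alpha y == 1 by apply: Ha; rewrite !inE eqxx orbT.
      have pxy : p x = y by apply: (Muniq x) => //; exact: pP.
      case/negP: fn; apply/imsetP; case: (boolP (x \in D)) => xD.
      * have pyx : p y = x by rewrite -pxy ppv.
        exists y; first by rewrite inE -{1}pxy pD' // ay' pyx ax'.
        by rewrite /g pyx.
      * exists x; first by rewrite inE xD ax' pxy ay'.
        by rewrite /g pxy setUC.
    apply: (@leq_trans (\sum_(i in M :&: (g @: W)) 1)); first by apply: leq_sum => f _; apply: ew_le1.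
    rewrite sum1_card; apply: leq_trans (leq_imset_card g W).
    by apply: subset_leq_card; apply: subsetIr.
  have [R [RW cR]] := subset_card_k rW.
  have zsum : forall v', v' \in D -> forall F : T -> nat,
      \sum_(v | inZ e D v' v) F v = F (p v') + \sum_(v | inZ e D v' v && (v != p v')) F v.
    move=> v' Hv F; rewrite (bigD1 (p v')) //.
    by rewrite /inZ Hv pD' // ep.
  have zsumN : forall v, v \notin D -> forall F : T -> nat,
      \sum_(v' | inZ e D v' v) F v' = F (p v) + \sum_(v' | inZ e D v' v && (v' != p v)) F v'.
    move=> v Hv F; rewrite (bigD1 (p v)) //.
    by rewrite /inZ pD'' // Hv /=; have := ep (p v); rewrite ppv.
  exists D, z, za, R; split; first split; last split; last split; last split; last split;
    last split.
  + by move=> x y _; rewrite /z leq_b1.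
  + split.
    * move=> v' Hv; rewrite (zsum v' Hv) /z eqxx big1 // => i /andP [_ /negbTE ->] //.
    * move=> v Hv; rewrite (zsumN v Hv) /z ppv eqxx big1 // => i /andP [_ ni].
      case: eqP => // E; case/negP: ni; by rewrite E ppv.
  + by move=> x y _; rewrite /za leq_b1.
  + apply/subsetP => v /(subsetP RW); rewrite !inE => /and3P [] //.
  + by [].
  + by move=> x y _; rewrite /za /z; case: (y == p x); rewrite /= ?leq_b1.
  + move=> v' Hv; rewrite (zsum v' Hv) /za eqxx /= big1; last first.
      by move=> i /andP [_ /negbTE ->].
    by rewrite addn0; have := alpha01 v'; case: (alpha v') => [|[|]].
  + move=> v /(subsetP RW); rewrite inE => /and3P [Hv av apv].
    rewrite (zsumN v Hv) /za ppv eqxx apv (eqP av) /=.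
    by rewrite addnA mulnDr; apply: leq_trans (leq_addr _ _).
Qed.
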